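(* Let $k\ge 1$ and let $v_0,\pi_1,v_1,\dots,\pi_k$ be generated by Approximate Value Iteration with errors $\epsilon_1,\dots,\epsilon_{k-1}$ (for any choice of greedy policies at each step). Let $\epsilon=\max_{1\le j<k}\operatorname{span}(\epsilon_j)$ (with $\epsilon=0$ if $k=1$). Then $$\|v_*-v_{\pi_k}\|_\infty \le \frac{1}{1-\gamma}\left(\frac{\gamma-\gamma^k}{1-\gamma}\,\epsilon+\gamma^k\operatorname{span}(v_*-v_0)\right).$$
   Context: A Markov Decision Process with finite state space $S$, finite action space $A$, reward function $r(s,a)$, transition probabilities $p(s'|s,a)$ and discount factor $\gamma\in[0,1)$. For a (deterministic, stationary) policy $\pi:S\to A$, let $r_\pi(s)=r(s,\pi(s))$, let $P_\pi$ be the stochastic matrix $P_\pi(s,s')=p(s'|s,\pi(s))$, and let $T_\pi v=r_\pi+\gamma P_\pi v$ be the Bellman operator of $\pi$; $v_\pi$ is its unique fixed point (the expected $\gamma$-discounted total reward of $\pi$). The Bellman optimality operator is $Tv=\max_\pi T_\pi v$ (componentwise), $v_*$ is its fixed point (the optimal value), and a policy $\pi$ is greedy with respect to $v$ if $T_\pi v=Tv$. For a function $f:S\to\mathbb R$, $\operatorname{span}(f)=\max_s f(s)-\min_s f(s)$. Approximate Value Iteration: starting from an arbitrary $v_0:S\to\mathbb R$, for $j\ge 0$ pick any policy $\pi_{j+1}$ greedy with respect to $v_j$ and set $v_{j+1}=T_{\pi_{j+1}}v_j+\epsilon_{j+1}$, where $\epsilon_{j+1}:S\to\mathbb R$ are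 arbitrary error terms. *)

(* Defs.v *)
From HB Require Import structures.
From mathcomp Require Import all_boot all_order all_algebra.
Set Implicit Arguments. Unset Strict Implicit. Unset Printing Implicit Defensive.
Import Order.TTheory GRing.Theory Num.Theory.
Local Open Scope ring_scope.

Section MDP.
Variables (R : realFieldType) (S A : finType).

(* p s a s' = p(s'|s,a) is a stochastic kernel *)
Definition stochastic (p : S -> A -> S -> R) : Prop :=
  (forall s a s', 0 <= p s a s') /\ (forall s a, \sum_(s' : S) p s a s' = 1).

Definition qval (r : S -> A -> R) (p : S -> A -> S -> R) (gamma : R)
    (v : S -> R) (s : S) (a : A) : R :=
  r s a + gamma * \sum_(s' : S) p s a s' * v s'.

Definition Tpol r p gamma (pi : S -> A) (v : S -> R) : S -> R :=
  fun s => qval r p gamma v s (pi s).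

Definition is_max (x : R) (F : A -> R) : Prop :=
  (exists a, x = F a) /\ (forall a, F a <= x).

(* (T v)(s) = max_pi (T_pi v)(s) = max_a qval v s a, componentwise;
   "w = T v" is stated as: w s is the max over actions for every s. *)
Definition is_Tv r p gamma (v w : S -> R) : Prop :=
  forall s, is_max (w s) (qval r p gamma v s).

Definition is_opt_value r p gamma (v : S -> R) : Prop := is_Tv r p gamma v v.

Definition is_policy_value r p gamma (pi : S -> A) (v : S -> R) : Prop :=
  forall s, v s = Tpol r p gamma pi v s.

Definition greedy r p gamma (pi : S -> A) (v : S -> R) : Prop :=
  is_Tv r p gamma v (Tpol r p gamma pi v).

(* span f = max_s f s - min_s f s = max_{s,s'} (f s - f s') (0 if S empty) *)
Definition spanf (f : S -> R) : R :=
  \big[Num.max/0]_(s : S) \big[Num.max/0]_(s' : S) (f s - f s').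

Definition supnorm (f : S -> R) : R := \big[Num.max/0]_(s : S) `|f s|.

End MDP.

(* Main.v *)
Require Import Defs.
From HB Require Import structures.
From mathcomp Require Import all_boot all_order all_algebra.
From mathcomp Require Import ring lra.
Import Order.TTheory GRing.Theory Num.Theory.
Local Open Scope ring_scope.

Lemma span_ge (R : realFieldType) (S : finType) (f : S -> R) s s' :
  f s - f s' <= spanf f.
Proof.
rewrite /spanf; apply: le_trans (le_bigmax _ _ s).
exact: (le_bigmax _ (fun s' => f s - f s') s').
Qed.

Lemma span_ge0 (R : realFieldType) (S : finType) (f : S -> R) : 0 <= spanf f.
Proof. exact: bigmax_ge_id. Qed.

Lemma span_le (R : realFieldType) (S : finType) (f : S -> R) c :
  0 <= c -> (forall s s', f s - f s' <= c) -> spanf f <= c.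
Proof.
move=> c0 H; apply: bigmax_le => // s _; apply: bigmax_le => // s' _; exact: H.
Qed.

Lemma sup_ge (R : realFieldType) (S : finType) (f : S -> R) s :
  `|f s| <= supnorm f.
Proof. exact: (le_bigmax _ (fun s => `|f s|) s). Qed.

Lemma sup_le (R : realFieldType) (S : finType) (f : S -> R) c :
  0 <= c -> (forall s, `|f s| <= c) -> supnorm f <= c.
Proof. move=> c0 H; apply: bigmax_le => // s _; exact: H. Qed.

Lemma exp_abs (R : realFieldType) (S A : finType) (p : S -> A -> S -> R)
  (hp : stochastic p) s a (f : S -> R) :
  `|\sum_t p s a t * f t| <= supnorm f.
Proof.
case: hp => p0 p1.
apply: le_trans (ler_norm_sum _ _ _) _.
apply: le_trans (_ : \sum_t p s a t * supnorm f <= _).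
  apply: ler_sum => t _; rewrite normrM ger0_norm //.
  by apply: ler_wpM2l => //; exact: sup_ge.
by rewrite -mulr_suml p1 mul1r.
Qed.

Lemma exp_diff (R : realFieldType) (S A : finType) (p : S -> A -> S -> R)
  (hp : stochastic p) s a s' a' (f : S -> R) :
  \sum_t p s a t * f t - \sum_t p s' a' t * f t <= spanf f.
Proof.
case: hp => p0 p1.
have E : \sum_t p s a t * f t - \sum_t p s' a' t * f t =
   \sum_t \sum_u p s a t * p s' a' u * (f t - f u).
  transitivity (\sum_t \sum_u (p s a t * f t) * p s' a' u
               - \sum_t \sum_u p s a t * (p s' a' u * f u)).
    under [X in _ = X - _]eq_bigr do rewrite -mulr_sumr p1 mulr1.
    under [X in _ = _ - X]eq_bigr do rewrite -mulr_sumr.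
    by rewrite -mulr_suml p1 mul1r.
  rewrite -sumrB; apply: eq_bigr => t _; rewrite -sumrB; apply: eq_bigr => u _.
  ring.
rewrite E.
apply: le_trans (_ : \sum_t \sum_u p s a t * p s' a' u * spanf f <= _).
  apply: ler_sum => t _; apply: ler_sum => u _.
  by apply: ler_wpM2l; [exact: mulr_ge0 | exact: span_ge].
under eq_bigr do rewrite -mulr_suml -mulr_sumr p1 mulr1.
by rewrite -mulr_suml p1 mul1r.
Qed.

Lemma sum_lin (R : realFieldType) (S : finType) (q f g : S -> R) :
  \sum_t q t * (f t - g t) = \sum_t q t * f t - \sum_t q t * g t.
Proof. rewrite -sumrB; apply: eq_bigr => t _; exact: mulrBr. Qed.

Arguments span_ge {R S}.
Arguments span_ge0 {R S}.
Arguments span_le {R S}.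
Arguments sup_ge {R S}.
Arguments sup_le {R S}.
Arguments exp_abs {R S A p}.
Arguments exp_diff {R S A p}.

Theorem theorem1 (R : realFieldType) (S A : finType)
    (r : S -> A -> R) (p : S -> A -> S -> R) (gamma : R)
    (hp : stochastic p) (hg0 : 0 <= gamma) (hg1 : gamma < 1)
    (vstar : S -> R) (hvstar : is_opt_value r p gamma vstar)
    (k : nat) (hk : (1 <= k)%N)
    (v : nat -> S -> R) (pi : nat -> S -> A) (eps : nat -> S -> R)
    (hgreedy : forall j : nat, (j < k)%N -> greedy r p gamma (pi j.+1) (v j))
    (hupd : forall j : nat, (j.+1 < k)%N ->
        v j.+1 = (fun s => Tpol r p gamma (pi j.+1) (v j) s + eps j.+1 s))
    (vpik : S -> R) (hvpik : is_policy_value r p gamma (pi k) vpik) :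
  let e := \big[Num.max/0]_(1 <= j < k) spanf (eps j) in
  supnorm (fun s => vstar s - vpik s)
    <= (1 - gamma)^-1 *
       ((gamma - gamma ^+ k) / (1 - gamma) * e
        + gamma ^+ k * spanf (fun s => vstar s - v 0%N s)).
Proof.
cbv zeta; set e := \big[Num.max/0]_(1 <= j < k) spanf (eps j).
have [p0 p1] := hp.
have g1 : 0 < 1 - gamma by rewrite subr_gt0.
have g1' : 1 - gamma != 0 by rewrite gt_eqF.
have e0 : 0 <= e by exact: bigmax_ge_id.
have he : forall j, (1 <= j < k)%N -> spanf (eps j) <= e.
  by move=> j hj; rewrite /e (bigD1_seq j) ?mem_index_iota ?iota_uniq //= le_max lexx.
set s0 := spanf (fun s => vstar s - v 0%N s).
pose B := fun j : nat => gamma ^+ j * s0 + (1 - gamma ^+ j) / (1 - gamma) * e.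
have key : forall j, (j < k)%N -> spanf (fun s => vstar s - v j s) <= B j.
  elim=> [|i IH] hj.
    by rewrite /B expr0 mul1r subrr !mul0r addr0.
  have IH' := IH (ltnW hj).
  apply: (le_trans (y := gamma * spanf (fun s => vstar s - v i s) + spanf (eps i.+1))).
    apply: span_le; first by rewrite addr_ge0 ?mulr_ge0 ?span_ge0.
    move=> s s'; rewrite (hupd i hj) /=.
    have [[a1 Ha1] _] := hvstar s; have [_ Hs'] := hvstar s'.
    have [_ Gs] := hgreedy i (ltnW hj) s.
    have := Gs a1; have := Hs' (pi i.+1 s').
    have Hd := exp_diff hp s a1 s' (pi i.+1 s') (fun t => vstar t - v i t).
    have Hd' := ler_wpM2l hg0 Hd.
    have := span_ge (eps i.+1) s' s.
    move: Ha1 Hd'; rewrite /Tpol /qval.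
    rewrite !sum_lin.
    move=> H1 H2 H3 H4 H5. set X1 := \sum_t p s a1 t * vstar t in H1 H2 H3 H4 H5 *. set Y1 := \sum_t p s a1 t * v i t in H1 H2 H3 H4 H5 *. set X2 := \sum_t p s' (pi i.+1 s') t * vstar t in H1 H2 H3 H4 H5 *. set Y2 := \sum_t p s' (pi i.+1 s') t * v i t in H1 H2 H3 H4 H5 *. set Z := \sum_t p s (pi i.+1 s) t * v i t in H1 H2 H3 H4 H5 *. lra.
  have Hg := ler_wpM2l hg0 IH'.
  have Hej := he i.+1 hj.
  have -> : B i.+1 = gamma * B i + e.
    rewrite /B exprS; field; exact: g1'.
  lra.
have [k' Ek] : exists k', k = k'.+1 by exists k.-1; rewrite prednK.
subst k.
set w := fun s => vstar s - vpik s.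
set N := supnorm w.
set d := fun s => vstar s - v k' s.
have hd := key k' (ltnSn k').
have hb : forall s, `|w s| <= gamma * spanf d + gamma * N.
  move=> s.
  have [[a1 Ha1] _] := hvstar s; have [_ Hs] := hvstar s.
  have [_ Gs] := hgreedy k' (ltnSn k') s.
  have Hv := hvpik s.
  have Hw := exp_abs hp s (pi k'.+1 s) w.
  have Hd := exp_diff hp s a1 s (pi k'.+1 s) d.
  have Hd' := ler_wpM2l hg0 Hd.
  rewrite ler_norml in Hw; case/andP: Hw => Hw1 Hw2.
  have Hw1' := ler_wpM2l hg0 Hw1.
  have Hw2' := ler_wpM2l hg0 Hw2.
  have := Gs a1; have := Hs (pi k'.+1 s).
  have Sd : 0 <= gamma * spanf d by exact: mulr_ge0 hg0 (span_ge0 _).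
  rewrite ler_norml.
  move: Ha1 Hv Hd' Hw1' Hw2'; rewrite /w /d /Tpol /qval.
  rewrite !sum_lin.
  move=> H1 H2 H3 H4 H5 H6 H7.
  set a2 := pi k'.+1 s in H1 H2 H3 H4 H5 H6 H7 *.
  set X1 := \sum_t p s a1 t * vstar t in H1 H2 H3 H4 H5 H6 H7 *.
  set Y1 := \sum_t p s a1 t * v k' t in H1 H2 H3 H4 H5 H6 H7 *.
  set X2 := \sum_t p s a2 t * vstar t in H1 H2 H3 H4 H5 H6 H7 *.
  set Y2 := \sum_t p s a2 t * v k' t in H1 H2 H3 H4 H5 H6 H7 *.
  set W2 := \sum_t p s a2 t * vpik t in H1 H2 H3 H4 H5 H6 H7 *.
  move: Sd; rewrite /N /w /d => Sd.
  apply/andP; split; lra.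
have hN : N <= gamma * spanf d + gamma * N.
  apply: sup_le; last exact: hb.
  by rewrite addr_ge0 ?mulr_ge0 ?span_ge0 // /N; exact: bigmax_ge_id.
have hN' : (1 - gamma) * N <= gamma * B k'.
  have := ler_wpM2l hg0 hd; lra.
have -> : (gamma - gamma ^+ k'.+1) / (1 - gamma) * e + gamma ^+ k'.+1 * s0
          = gamma * B k'.
  rewrite /B exprS; field; exact: g1'.
have -> : N = (1 - gamma)^-1 * ((1 - gamma) * N) by field.
apply: ler_wpM2l => //; rewrite invr_ge0; exact: ltW.
Qed.
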